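(* For $a>0$ let $\delta^{(a)}=(\delta_0,\delta_1)=\left(\frac{a}{2a+1},\frac{a+1}{2a+1}\right)$ (the Bayes predictive decision for the symmetric Beta$(a,a)$ prior). Then $$\sup_{\theta\in[0,1]}R_{\delta^{(a)}}(\theta)=\begin{cases}\log\dfrac{2a+1}{a+1}, & a\ge 1/3,\\[2mm] \dfrac12\log\dfrac{a+1}{4a}+\log\dfrac{2a+1}{a+1}, & 0<a\le 1/3.\end{cases}$$
   Context: Bernoulli model: for $\theta\in[0,1]$, $p_\theta(x)=\theta^x(1-\theta)^{1-x}$, $x\in\{0,1\}$. A nonrandomized decision is a pair $\delta=(\delta_0,\delta_1)\in[0,1]^2$, used as the predictive distribution $p_\delta(y\mid x)=\delta_x^{\,y}(1-\delta_x)^{1-y}$ for a future $y\in\{0,1\}$ after observing $x$. The Kullback–Leibler risk is $R_\delta(\theta)=-S(\theta)+\theta^2\log\frac1{\delta_1}+\theta(1-\theta)\log\frac1{1-\delta_1}+\theta(1-\theta)\log\frac1{\delta_0}+(1-\theta)^2\log\frac1{1-\delta_0}$, where $S(\theta)=-\theta\log\theta-(1-\theta)\log(1-\theta)$ (with $0\log 0=0$) is the binary entropy. *)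

(* Defs.v *)
From Stdlib Require Import Reals.
Open Scope R_scope.

Definition xlogx (x : R) : R := if Req_EM_T x 0 then 0 else x * ln x.

Definition bin_entropy (t : R) : R := - xlogx t - xlogx (1 - t).

Definition KL_risk (d0 d1 t : R) : R :=
  - bin_entropy t
  + t ^ 2 * ln (1 / d1)
  + t * (1 - t) * ln (1 / (1 - d1))
  + t * (1 - t) * ln (1 / d0)
  + (1 - t) ^ 2 * ln (1 / (1 - d0)).

Definition delta0 (a : R) : R := a / (2 * a + 1).
Definition delta1 (a : R) : R := (a + 1) / (2 * a + 1).

Definition risk_values (a : R) (r : R) : Prop :=
  exists t, 0 <= t <= 1 /\ r = KL_risk (delta0 a) (delta1 a) t.

(* Main.v *)
Require Import Defs.
From Stdlib Require Import Reals Lra Psatz Classical.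
From Coquelicot Require Import Coquelicot.
Open Scope R_scope.

Lemma ln_le_sub1 z : 0 < z -> ln z <= z - 1.
Proof.
  intros Hz. destruct (Req_dec z 1) as [->|Hn].
  - rewrite ln_1; lra.
  - assert (H := exp_ineq1 (z - 1)). assert (z - 1 <> 0) by lra.
    specialize (H H0). left. rewrite <- (ln_exp (z-1)).
    apply ln_increasing; lra.
Qed.

Lemma ln2_lt_1 : ln 2 < 1.
Proof.
  rewrite <- ln_exp. apply ln_increasing; try lra.
  assert (H := exp_ineq1 1). lra.
Qed.

Definition L2 := ln 2.
Definition psi x := 2 * L2 * x^2 - ((1 + x) * ln (1 + x) + (1 - x) * ln (1 - x)).
Definition dpsi x := 4 * L2 * x - ln (1 + x) + ln (1 - x).
Definition ddpsi x := 4 * L2 - 2 / (1 - x^2).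

Lemma psi_der x : -1 < x < 1 -> derivable_pt_lim psi x (dpsi x).
Proof.
  intros Hx. apply is_derive_Reals. unfold psi, dpsi.
  auto_derive. { repeat split; lra. } replace (1 + - x) with (1 - x) by ring. field; lra.
Qed.

Lemma dpsi_der x : -1 < x < 1 -> derivable_pt_lim dpsi x (ddpsi x).
Proof.
  intros Hx. apply is_derive_Reals. unfold ddpsi, dpsi.
  auto_derive. { repeat split; lra. } replace (1 + - x) with (1 - x) by ring.
  field; split; [|split]; nra.
Qed.

Lemma dpsi0 : dpsi 0 = 0.
Proof. unfold dpsi. rewrite Rplus_0_r, Rminus_0_r, ln_1. ring. Qed.

Lemma ddpsi_decr c1 c2 : 0 <= c1 -> c1 < c2 -> c2 < 1 -> ddpsi c2 < ddpsi c1.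
Proof.
  intros. unfold ddpsi. assert (0 < 1 - c2^2) by nra.
  assert (1 - c2^2 < 1 - c1^2) by nra.
  assert (2 / (1 - c1^2) < 2 / (1 - c2^2)).
  { unfold Rdiv. apply Rmult_lt_compat_l; try lra. apply Rinv_lt_contravar; nra. }
  lra.
Qed.

Lemma unimodal z y : 0 <= z -> z < y -> y < 1 -> dpsi z < 0 -> dpsi y < 0.
Proof.
  intros H0 Hzy Hy Hz.
  destruct (Req_dec z 0) as [->|Hnz]. { rewrite dpsi0 in Hz; lra. }
  destruct (MVT_cor2 dpsi ddpsi 0 z) as [c1 [E1 C1]]; [lra| |].
  { intros c Hc. apply dpsi_der. lra. }
  destruct (MVT_cor2 dpsi ddpsi z y) as [c2 [E2 C2]]; [lra| |].
  { intros c Hc. apply dpsi_der. lra. }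
  rewrite dpsi0 in E1.
  assert (ddpsi c1 < 0) by nra.
  assert (ddpsi c2 < ddpsi c1) by (apply ddpsi_decr; lra).
  nra.
Qed.

Lemma psi0 : psi 0 = 0.
Proof. unfold psi. rewrite Rplus_0_r, Rminus_0_r, ln_1. ring. Qed.

Lemma psi_lower y : 0 <= y < 1 -> psi y >= -3 * (1 - y).
Proof.
  intros Hy. unfold psi.
  assert (ln (1 - y) <= 0).
  { assert (Hq := ln_le_sub1 (1-y)). lra. }
  assert (ln (1 + y) <= L2 + (y - 1)/2).
  { assert (Hq2 := ln_le_sub1 ((1+y)/2)). unfold L2.
    replace ((1+y)/2) with ((1+y) * / 2) in Hq2 by lra.
    rewrite ln_mult, ln_Rinv in Hq2; lra. }
  assert (HL := ln2_lt_1). assert (HL2 := ln_lt_2). fold L2 in HL, HL2.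
  assert ((1-y) * ln (1-y) <= 0) by nra.
  assert ((1+y) * ln (1+y) <= (1+y) * (L2 + (y-1)/2)) by nra.
  assert (0 <= (1-y) * (3 - L2*(2*y+1) + (y+1)/2)).
  { apply Rmult_le_pos; nra. }
  nra.
Qed.

Lemma psi_nonneg x : 0 <= x < 1 -> 0 <= psi x.
Proof.
  intros Hx. destruct (Req_dec x 0) as [->|Hnz]. { rewrite psi0; lra. }
  destruct (Rlt_or_le (dpsi x) 0) as [Hneg|Hpos].
  - apply Rnot_lt_le; intros Hlt.
    set (e := - psi x).
    set (y := 1 - Rmin (e/6) ((1-x)/2)).
    assert (Hm1 : Rmin (e/6) ((1-x)/2) <= e/6) by apply Rmin_l.
    assert (Hm2 : Rmin (e/6) ((1-x)/2) <= (1-x)/2) by apply Rmin_r.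
    assert (Hm3 : 0 < Rmin (e/6) ((1-x)/2)).
    { apply Rmin_glb_lt; unfold e; lra. }
    destruct (MVT_cor2 psi dpsi x y) as [c [E C]]; [unfold y; lra| |].
    { intros c Hc. apply psi_der. unfold y in Hc. lra. }
    assert (dpsi c < 0) by (apply (unimodal x c); unfold y in C; lra).
    assert (psi y >= -3 * (1 - y)) by (apply psi_lower; unfold y; lra).
    assert (psi y - psi x < 0) by (rewrite E; unfold y in *; nra).
    unfold y, e in *. lra.
  - destruct (MVT_cor2 psi dpsi 0 x) as [c [E C]]; [lra| |].
    { intros c Hc. apply psi_der. lra. }
    assert (0 <= dpsi c).
    { apply Rnot_lt_le; intro. assert (dpsi x < 0) by (apply (unimodal c x); lra). lra. }
    rewrite psi0 in E. nra.
Qed.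

Lemma psi_even x : psi (-x) = psi x.
Proof. unfold psi. replace (1 + - x) with (1 - x) by ring. replace (1 - - x) with (1 + x) by ring. ring. Qed.

Lemma xlogx_pos t : 0 < t -> xlogx t = t * ln t.
Proof. intros. unfold xlogx. destruct (Req_EM_T t 0); [lra|auto]. Qed.

Lemma xlogx_0 : xlogx 0 = 0.
Proof. unfold xlogx. destruct (Req_EM_T 0 0); [auto|lra]. Qed.

Lemma xlogx_1 : xlogx 1 = 0.
Proof. rewrite xlogx_pos by lra. rewrite ln_1; ring. Qed.

Lemma entropy_bound t : 0 <= t <= 1 -> 4 * ln 2 * (t * (1 - t)) <= bin_entropy t.
Proof.
  intros Ht. unfold bin_entropy.
  destruct (Req_dec t 0) as [->|H0].
  { replace (1 - 0) with 1 by ring. rewrite xlogx_0, xlogx_1. lra. }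
  destruct (Req_dec t 1) as [->|H1].
  { replace (1 - 1) with 0 by ring. rewrite xlogx_0, xlogx_1. lra. }
  rewrite !xlogx_pos by lra.
  assert (Hp : 0 <= psi (2*t - 1)).
  { destruct (Rle_or_lt 0 (2*t-1)).
    - apply psi_nonneg; lra.
    - rewrite <- psi_even. apply psi_nonneg; lra. }
  unfold psi in Hp.
  replace (1 + (2*t-1)) with (2 * t) in Hp by ring.
  replace (1 - (2*t-1)) with (2 * (1 - t)) in Hp by ring.
  rewrite !ln_mult in Hp by lra. unfold L2 in Hp. nra.
Qed.

Lemma ln_le' x y : 0 < x -> x <= y -> ln x <= ln y.
Proof. intros. destruct (Req_dec x y) as [->|]; [lra|]. left; apply ln_increasing; lra. Qed.

Lemma risk_eq a t : 0 < a ->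
  KL_risk (delta0 a) (delta1 a) t =
  ln ((2 * a + 1) / (a + 1)) - bin_entropy t + 2 * (t * (1 - t)) * ln ((a + 1) / a).
Proof.
  intros Ha. unfold KL_risk, delta0, delta1.
  replace (1 / ((a + 1) / (2 * a + 1))) with ((2 * a + 1) / (a + 1)) by (field; lra).
  replace (1 / (1 - (a + 1) / (2 * a + 1))) with ((2 * a + 1) / a) by (field; lra).
  replace (1 / (a / (2 * a + 1))) with ((2 * a + 1) / a) by (field; lra).
  replace (1 / (1 - a / (2 * a + 1))) with ((2 * a + 1) / (a + 1)) by (field; lra).
  replace ((2 * a + 1) / a) with (((2 * a + 1) / (a + 1)) * ((a + 1) / a)) by (field; lra).
  rewrite ln_mult.
  - ring.
  - apply Rdiv_lt_0_compat; lra.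
  - apply Rdiv_lt_0_compat; lra.
Qed.

Lemma ln4 : ln 4 = 2 * ln 2.
Proof. replace 4 with (2 * 2) by ring. rewrite ln_mult by lra. ring. Qed.

Theorem mainTheorem5 (a : R) (ha : 0 < a) :
  (1 / 3 <= a ->
     is_lub (risk_values a) (ln ((2 * a + 1) / (a + 1)))) /\
  (a <= 1 / 3 ->
     is_lub (risk_values a)
       (1 / 2 * ln ((a + 1) / (4 * a)) + ln ((2 * a + 1) / (a + 1)))).
Proof.
  set (c := ln ((a + 1) / a)).
  assert (Hq : 0 < (a + 1) / a) by (apply Rdiv_lt_0_compat; lra).
  assert (Hc4 : ln ((a + 1) / (4 * a)) = c - 2 * ln 2).
  { replace ((a + 1) / (4 * a)) with (((a + 1) / a) * / 4) by (field; lra).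
    rewrite ln_mult, ln_Rinv, ln4 by lra. unfold c; ring. }
  assert (HS0 : bin_entropy 0 = 0).
  { unfold bin_entropy. replace (1 - 0) with 1 by ring. rewrite xlogx_0, xlogx_1. ring. }
  assert (HSh : bin_entropy (1/2) = ln 2).
  { unfold bin_entropy. replace (1 - 1/2) with (1/2) by field.
    rewrite xlogx_pos by lra. replace (1/2) with (/ 2) by field.
    rewrite ln_Rinv by lra. field. }
  assert (Hl2 := ln_lt_2).
  split; intro Ha.
  - assert (Hc : c <= 2 * ln 2).
    { rewrite <- ln4. apply ln_le'; auto.
      apply (Rmult_le_reg_r a); [lra|]. unfold Rdiv. rewrite Rmult_assoc, Rinv_l; lra. }
    split.
    + intros r [t [Ht ->]]. rewrite risk_eq by lra. fold c.
      assert (H := entropy_bound t Ht).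
      assert (0 <= t * (1 - t)) by nra.
      assert (0 <= c).
      { unfold c. rewrite <- ln_1. apply ln_le'; [lra|].
        apply (Rmult_le_reg_r a); [lra|]. unfold Rdiv. rewrite Rmult_assoc, Rinv_l; lra. }
      nra.
    + intros b Hb. apply Hb. exists 0. split; [lra|].
      rewrite risk_eq, HS0 by lra. ring.
  - assert (Hc : 2 * ln 2 <= c).
    { rewrite <- ln4. apply ln_le'; [lra|].
      apply (Rmult_le_reg_r a); [lra|]. unfold Rdiv. rewrite Rmult_assoc, Rinv_l; lra. }
    rewrite Hc4. split.
    + intros r [t [Ht ->]]. rewrite risk_eq by lra. fold c.
      assert (H := entropy_bound t Ht).
      assert (0 <= t * (1 - t)) by nra.
      assert (t * (1 - t) <= 1/4) by (assert (Hsq := pow2_ge_0 (t - 1/2)); nra).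
      assert ((c - 2 * ln 2) * (1/4 - t * (1 - t)) >= 0) by (apply Rle_ge, Rmult_le_pos; lra).
      nra.
    + intros b Hb. apply Hb. exists (1/2). split; [lra|].
      rewrite risk_eq, HSh by lra. fold c. field.
Qed.
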